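(* Let $\mathsf{X}=\mathbb{R}^d$, $\mathsf{Y}=\mathbb{R}^{d'}$, $T\in\mathbb{N}$, and consider a hidden Markov model with initial density $\mu$ on $\mathsf{X}$, transition density $f$ on $\mathsf{X}$, and observation density $g:\mathsf{X}\times\mathsf{Y}\to\mathbb{R}_+$ (bounded, continuous), i.e. $(X_t)$ is a Markov chain with $X_1\sim\mu$, $X_t\mid X_{t-1}=x\sim f(x,\cdot)$, and let $\mathbb{E}$ denote expectation under this law. Fix observations $y_{1:T}\in\mathsf{Y}^T$ and let $L:=\mathbb{E}\left[\prod_{t=1}^T g(X_t,y_t)\right]>0$. Define $\boldsymbol\psi^*=(\psi_1^*,\dots,\psi_T^* )$ by $\psi_T^*(x_T):=g(x_T,y_T)$ and $$\psi_t^*(x_t):=g(x_t,y_t)\,\mathbb{E}\Big[\prod_{p=t+1}^T g(X_p,y_p)\,\Big|\,X_t=x_t\Big],\qquad x_t\in\mathsf{X},\ t\in\{1,\dots,T-1\},$$ and assume each $\psi_t^*$ is positive. Then for every $N\in\mathbb{N}$, the estimate $Z^N_{\boldsymbol\psi^*}$ produced by the $\boldsymbol\psi^*$-auxiliary particle filter with $N$ particles satisfies $Z^N_{\boldsymbol\psi^*}=L$ with probability $1$.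
   Context: For a transition density $f$ and function $\psi$ write $f(x,\psi):=\int_{\mathsf{X}}f(x,x')\psi(x')\,dx'$. Given positive functions $\boldsymbol\psi=(\psi_1,\dots,\psi_T)$, define $\tilde\psi_t(x):=f(x,\psi_{t+1})$ for $t\in\{1,\dots,T-1\}$, $\tilde\psi_T\equiv 1$, $\tilde\psi_0:=\int\mu(x_1)\psi_1(x_1)\,dx_1$, and the twisted model $\mu_1^{\boldsymbol\psi}(x_1):=\mu(x_1)\psi_1(x_1)/\tilde\psi_0$; $f_t^{\boldsymbol\psi}(x_{t-1},x_t):=f(x_{t-1},x_t)\psi_t(x_t)/\tilde\psi_{t-1}(x_{t-1})$ ($t\ge2$); $g_1^{\boldsymbol\psi}(x_1):=g(x_1,y_1)\tilde\psi_1(x_1)\tilde\psi_0/\psi_1(x_1)$, $g_t^{\boldsymbol\psi}(x_t):=g(x_t,y_t)\tilde\psi_t(x_t)/\psi_t(x_t)$ ($t\ge2$). The $\boldsymbol\psi$-auxiliary particle filter with $N$ particles: sample $\xi_1^i\sim\mu_1^{\boldsymbol\psi}$ independently for $i=1,\dots,N$; for $t=2,\dots,T$ sample independently $\xi_t^i\sim \sum_{j=1}^N g_{t-1}^{\boldsymbol\psi}(\xi_{t-1}^j)f_t^{\boldsymbol\psi}(\xi_{t-1}^j,\cdot)\big/\sum_{j=1}^N g_{t-1}^{\boldsymbol\psi}(\xi_{t-1}^j)$, $i=1,\dots,N$. Its estimate is $Z^N_{\boldsymbol\psi}:=\prod_{t=1}^T\big[\frac1N\sum_{i=1}^N g_t^{\boldsymbol\psi}(\xi_t^i)\big]$.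 *)

(* Defs.v *)
From HB Require Import structures.
From mathcomp Require Import all_boot all_order all_algebra.
From mathcomp Require Import all_classical all_reals all_analysis.

Set Implicit Arguments.
Unset Strict Implicit.
Unset Printing Implicit Defensive.

Import Order.TTheory GRing.Theory Num.Theory.
Import numFieldNormedType.Exports.
Local Open Scope classical_set_scope.
Local Open Scope ring_scope.

Section APF.
Variable R : realType.

(* Lebesgue integral over R^d of a nonnegative function, written as    *)
(* the iterated one-dimensional Lebesgue integral over the coordinates *)
(* (Tonelli).                                                           *)

Definition consrow (d : nat) (x : R) (v : 'rV[R]_d) : 'rV[R]_d.+1 :=
  \row_(i < d.+1) match unlift ord0 i with Some j => v ord0 j | None => x end.

Fixpoint intRd (d : nat) : ('rV[R]_d -> \bar R) -> \bar R :=
  match d return ('rV[R]_d -> \bar R) -> \bar R with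
  | 0 => fun F => F 0
  | d'.+1 => fun F =>
      (\int[@lebesgue_measure R]_x intRd (fun v => F (consrow x v)))%E
  end.

Definition RintRd (d : nat) (F : 'rV[R]_d -> R) : R :=
  fine (intRd (fun x => (F x)%:E)).

(* the identification of d-tuples (carrying the product = Borel         *)
(* sigma-algebra of mathcomp-analysis) with row vectors                 *)
Definition t2r (d : nat) (t : d.-tuple R) : 'rV[R]_d := \row_i tnth t i.

Definition borel_fun (d : nat) (F : 'rV[R]_d -> R) : Prop :=
  measurable_fun setT (fun t : d.-tuple R => F (t2r t)).
Definition borel_fun2 (d : nat) (F : 'rV[R]_d -> 'rV[R]_d -> R) : Prop :=
  measurable_fun setT (fun p : d.-tuple R * d.-tuple R => F (t2r p.1) (t2r p.2)).

Variables (d d' : nat).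
Local Notation X := 'rV[R]_d.
Local Notation Y := 'rV[R]_d'.

(* The law of a finite stretch of the chain is given by iterated        *)
(* integrals of the densities.  [chain_int mu f n h F] integrates F     *)
(* over n further steps of the chain, started after the already fixed   *)
(* history h (h = [::] : start from the initial law mu;                 *)
(* h = [:: x] : conditionally on the current state being x).            *)
Variables (mu : X -> R) (f : X -> X -> R) (g : X -> Y -> R) (y : nat -> Y).

Definition chain_dens (h : seq X) (x : X) : R :=
  if h is a :: h' then f (last a h') x else mu x.

Fixpoint chain_int (n : nat) (h : seq X) (F : seq X -> \bar R) : \bar R :=
  match n with
  | 0 => F h
  | n'.+1 => intRd (fun x => (chain_dens h x)%:E * chain_int n' (rcons h x) F)%E
  end.

Variable T : nat.

(* L := E[ prod_{t=1}^T g(X_t, y_t) ]  (entry t of the list is X_{t+1}) *)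
Definition Lik : \bar R :=
  chain_int T [::] (fun xs => (\prod_(t < T) g (nth 0 xs t) (y t.+1))%:E).

(* psi*_t(x) := g(x,y_t) E[ prod_{p=t+1}^T g(X_p,y_p) | X_t = x ],     *)
(* for 1 <= t <= T (for t = T the conditional expectation is of the     *)
(* empty product, i.e. psi*_T(x) = g(x, y_T)).  In the list, entry 0 is *)
(* X_t = x and entry p is X_{t+p}.                                       *)
Definition psi_star (t : nat) (x : X) : R :=
  g x (y t) *
  fine (chain_int (T - t) [:: x]
          (fun xs => (\prod_(p < T - t) g (nth 0 xs p.+1) (y (t + p.+1)))%:E)).

(* Twisted model for psi = (psi_1, ..., psi_T)  (psi t used for t>=1)  *)
Variable psi : nat -> X -> R.

Definition psit (t : nat) (x : X) : R :=
  if (t < T)%N then RintRd (fun x' => f x x' * psi t.+1 x') else 1.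

Definition psit0 : R := RintRd (fun x => mu x * psi 1 x).

Definition mu_tw (x : X) : R := mu x * psi 1 x / psit0.

Definition f_tw (t : nat) (x x' : X) : R := f x x' * psi t x' / psit t.-1 x.

Definition g_tw (t : nat) (x : X) : R :=
  if t == 1%N then g x (y 1) * psit 1 x * psit0 / psi 1 x
  else g x (y t) * psit t x / psi t x.

(* The psi-auxiliary particle filter with N particles.  The N*T draws   *)
(* are made in the order xi_1^1..xi_1^N, xi_2^1, ..., xi_T^N; the list  *)
(* h of draws made so far determines the density of the next one.       *)
(* The draw number k = size h belongs to time k %/ N + 1.               *)
Variable N : nat.

Definition generation (h : seq X) (t : nat) : seq X :=
  take N (drop (t.-1 * N) h).

Definition apf_dens (h : seq X) (x : X) : R :=
  let t := (size h %/ N)%N in  (* previous time, 1-based; new draw at time t+1 *)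
  if t == 0%N then mu_tw x
  else (\sum_(z <- generation h t) g_tw t z * f_tw t.+1 z x) /
       (\sum_(z <- generation h t) g_tw t z).

Fixpoint apf_int (n : nat) (h : seq X) (F : seq X -> \bar R) : \bar R :=
  match n with
  | 0 => F h
  | n'.+1 => intRd (fun x => (apf_dens h x)%:E * apf_int n' (rcons h x) F)%E
  end.

Definition apf_prob (E : seq X -> bool) : \bar R :=
  apf_int (N * T) [::] (fun h => ((E h : nat)%:R)%:E).

Definition apf_Z (h : seq X) : R :=
  \prod_(t < T) (N%:R^-1 * \sum_(z <- generation h t.+1) g_tw t.+1 z).

End APF.

(* Main.v *)
Require Import Defs.
From HB Require Import structures.
From mathcomp Require Import all_boot all_order all_algebra.
From mathcomp Require Import all_classical all_reals all_analysis.

Import Order.TTheory GRing.Theory Num.Theory.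
Import numFieldNormedType.Exports.
Local Open Scope classical_set_scope.
Local Open Scope ring_scope.

Section NM.
Local Open Scope ereal_scope.
Context dd (TT : measurableType dd) (R : realType).
Variable mu : {measure set TT -> \bar R}.
Import HBNNSimple.

Lemma nm_le_integral (f1 f2 : TT -> \bar R) : (forall x, 0 <= f1 x) ->
  (forall x, f1 x <= f2 x) -> \int[mu]_x f1 x <= \int[mu]_x f2 x.
Proof.
move=> f10 f12.
have f20 x : 0 <= f2 x by exact: le_trans (f10 x) (f12 x).
rewrite !ge0_integralTE//.
apply: ereal_sup_le => _ [h hf1 <-]; exists h => //= x.
exact: le_trans (hf1 x) (f12 x).
Qed.

Lemma nm_integralZl (f : TT -> \bar R) (k : R) : (forall x, 0 <= f x) -> (0 <= k)%R ->
  \int[mu]_x (k%:E * f x) = k%:E * \int[mu]_x f x.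
Proof.
move=> f0; rewrite le_eqVlt => /orP[/eqP<-|k0].
  rewrite mul0e; under eq_integral do rewrite mul0e.
  exact: integral0.
have kf0 x : 0 <= k%:E * f x by rewrite mule_ge0// lee_fin ltW.
rewrite !ge0_integralTE// -ereal_supZl; last 2 first.
- by apply/set0P; exists (sintegral mu nnsfun0); exists nnsfun0 => //= x; rewrite f0.
- exact: ltW.
congr ereal_sup; apply/seteqP; split.
- move=> _ [h hf <-].
  have ki : (0 <= k^-1)%R by rewrite invr_ge0 ltW.
  exists (sintegral mu (scale_nnsfun h ki)).
    exists (scale_nnsfun h ki) => //= x.
    have k0' : (0 < k%:E) by rewrite lte_fin.
    rewrite -(@lee_pmul2l _ k%:E)// EFinM muleA -EFinM mulfV ?gt_eqF// mul1r.
    exact: hf.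
  rewrite (_ : (scale_nnsfun h ki : TT -> R) = (cst k^-1 \* h)%R)// sintegralrM.
  by rewrite muleA -EFinM mulfV ?gt_eqF// mul1e.
- move=> _ [_ [h hf <-] <-].
  exists (scale_nnsfun h (ltW k0)).
    move=> x /=; rewrite EFinM lee_pmul2l//; exact: hf.
  by rewrite (_ : (scale_nnsfun h (ltW k0) : TT -> R) = (cst k \* h)%R)// sintegralrM.
Qed.
End NM.

Section IntRd.
Local Open Scope ereal_scope.
Variable R : realType.

Lemma intRd_ge0 (d : nat) (F : 'rV[R]_d -> \bar R) :
  (forall v, 0 <= F v) -> 0 <= intRd F.
Proof.
elim: d F => [|d IH] F F0 /=; first exact: F0.
by apply: integral_ge0 => x _; apply: IH.
Qed.

Lemma intRd_le (d : nat) (F G : 'rV[R]_d -> \bar R) :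
  (forall v, 0 <= F v) -> (forall v, F v <= G v) -> intRd F <= intRd G.
Proof.
elim: d F G => [|d IH] F G F0 FG /=; first exact: FG.
apply: nm_le_integral => x; first by apply: intRd_ge0.
by apply: IH.
Qed.

Lemma intRdZ (d : nat) (F : 'rV[R]_d -> \bar R) (k : R) :
  (forall v, 0 <= F v) -> (0 <= k)%R ->
  intRd (fun v => k%:E * F v) = k%:E * intRd F.
Proof.
elim: d F => [|d IH] F F0 k0 //=.
rewrite -nm_integralZl//; last by move=> x; apply: intRd_ge0.
by congr integral; apply: funext => x; rewrite IH.
Qed.

Lemma intRd0 (d : nat) : intRd (fun _ : 'rV[R]_d => 0) = 0.
Proof.
elim: d => [|d IH] //=.
rewrite (_ : (fun x => _) = cst 0); first exact: integral0.
by apply: funext => x; rewrite IH.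
Qed.

End IntRd.
Section Chain.
Local Open Scope ereal_scope.
Variables (R : realType) (d d' : nat).
Variables (mu : 'rV[R]_d -> R) (f : 'rV[R]_d -> 'rV[R]_d -> R)
  (g : 'rV[R]_d -> 'rV[R]_d' -> R) (y : nat -> 'rV[R]_d').
Hypothesis mu0 : forall x, (0 <= mu x)%R.
Hypothesis f0 : forall x x', (0 <= f x x')%R.
Hypothesis g0 : forall x v, (0 <= g x v)%R.
Hypothesis mu1 : intRd (fun x => (mu x)%:E) = 1.
Hypothesis f1 : forall x, intRd (fun x' => (f x x')%:E) = 1.

Lemma dens_ge0 h x : (0 <= chain_dens mu f h x)%R.
Proof. by case: h => [|a h] /=; [apply: mu0|apply: f0]. Qed.

Lemma dens_int1 h : intRd (fun x => (chain_dens mu f h x)%:E) = 1.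
Proof. by case: h => [|a h] /=; [apply: mu1|apply: f1]. Qed.

Lemma chain_ge0 n h F : (forall l, 0 <= F l) -> 0 <= chain_int mu f n h F.
Proof.
elim: n h => [|n IH] h F0 /=; first exact: F0.
apply: intRd_ge0 => x; apply: mule_ge0; first by rewrite lee_fin dens_ge0.
exact: IH.
Qed.

Lemma chain_bound n h F (B : R) : (forall l, 0 <= F l) -> (forall l, F l <= B%:E) ->
  (0 <= B)%R -> chain_int mu f n h F <= B%:E.
Proof.
move=> F0 FB B0; elim: n h => [|n IH] h /=; first exact: FB.
apply: (@le_trans _ _ (intRd (fun x => B%:E * (chain_dens mu f h x)%:E))).
  apply: intRd_le => x.
    by apply: mule_ge0; [rewrite lee_fin dens_ge0|exact: chain_ge0].
  by rewrite muleC; apply: lee_wpmul2r; [rewrite lee_fin dens_ge0|exact: IH].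
by rewrite intRdZ// ?dens_int1 ?mule1// => x; rewrite lee_fin dens_ge0.
Qed.

Lemma chain_scale n h F (k : R) : (forall l, 0 <= F l) -> (0 <= k)%R ->
  chain_int mu f n h (fun l => k%:E * F l) = k%:E * chain_int mu f n h F.
Proof.
move=> F0 k0; elim: n h => [|n IH] h //=.
rewrite -intRdZ//; last first.
  by move=> x; apply: mule_ge0; [rewrite lee_fin dens_ge0|exact: chain_ge0].
by congr intRd; apply: funext => x; rewrite IH muleCA.
Qed.

Lemma chain_ext n h F G : (forall l, F (h ++ l) = G (h ++ l)) ->
  chain_int mu f n h F = chain_int mu f n h G.
Proof.
elim: n h => [|n IH] h FG /=; first by have := FG [::]; rewrite cats0.
congr intRd; apply: funext => x; rewrite IH// => l.
by rewrite cat_rcons.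
Qed.

Lemma chain_drop n a h F : h != [::] ->
  chain_int mu f n (a :: h) F = chain_int mu f n h (fun l => F (a :: l)).
Proof.
elim: n h => [|n IH] h hn //=.
congr intRd; apply: funext => x.
rewrite -rcons_cons IH; last by case: (h).
by case: h hn.
Qed.

End Chain.
Section Main.
Local Open Scope ereal_scope.
Variables (R : realType) (d d' : nat).
Variables (mu : 'rV[R]_d -> R) (f : 'rV[R]_d -> 'rV[R]_d -> R)
  (g : 'rV[R]_d -> 'rV[R]_d' -> R) (y : nat -> 'rV[R]_d') (T : nat).
Hypothesis T0 : (0 < T)%N.
Hypothesis mu0 : forall x, (0 <= mu x)%R.
Hypothesis f0 : forall x x', (0 <= f x x')%R.
Hypothesis g0 : forall x v, (0 <= g x v)%R.
Hypothesis mu1 : intRd (fun x => (mu x)%:E) = 1.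
Hypothesis f1 : forall x, intRd (fun x' => (f x x')%:E) = 1.
Hypothesis gM : exists M : R, forall x v, (g x v <= M)%R.
Hypothesis pos : forall t, (1 <= t <= T)%N -> forall x, (0 < psi_star mu f g y T t x)%R.

Let ps := psi_star mu f g y T.

Let C t x := chain_int mu f (T - t) [:: x]
  (fun xs => (\prod_(p < T - t) g (nth 0 xs p.+1) (y (t + p.+1)))%:E).

Lemma psE t x : ps t x = (g x (y t) * fine (C t x))%R.
Proof. by []. Qed.

Lemma C_fin t x : (1 <= t <= T)%N -> C t x \is a fin_num.
Proof.
move=> tT; have := pos t tT x; rewrite -/ps psE.
by case: (C t x) => //=; rewrite mulr0 ltxx.
Qed.

Lemma Fprod_ge0 t l : 0 <= (\prod_(p < T - t) g (nth 0 l p.+1) (y (t + p.+1)))%:E.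
Proof. by rewrite lee_fin; apply: prodr_ge0 => i _; apply: g0. Qed.

Lemma C_step t x : (1 <= t)%N -> (t < T)%N ->
  C t x = intRd (fun x' => (f x x')%:E * ((g x' (y t.+1))%:E * C t.+1 x')).
Proof.
move=> t1 tT; rewrite /C (_ : T - t = (T - t.+1).+1)%N; last by rewrite subnSK.
rewrite /=; congr intRd; apply: funext => x'.
rewrite (@chain_drop _ _ mu f) //=.
congr (_ * _); rewrite -chain_scale//; last by move=> l; apply: Fprod_ge0.
apply: chain_ext => l /=.
rewrite big_ord_recl /= -EFinM addn1; congr ((_ * _)%:E).
by apply: eq_bigr => i _; rewrite addSnnS.
Qed.

Lemma key t x : (1 <= t <= T)%N ->
  (g x (y t) * psit f T ps t x)%R = ps t x.
Proof.
move=> /andP[t1 tT]; rewrite /psit; case: ifPn => tT'.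
  rewrite psE; congr (_ * _)%R; rewrite /RintRd C_step//.
  congr (fine (intRd _)); apply: funext => x'.
  rewrite psE !EFinM fineK//; apply: C_fin.
  by rewrite tT' andbT.
have -> : t = T by apply/eqP; rewrite eqn_leq tT leqNgt.
by rewrite psE /C subnn /= big_ord0 mulr1.
Qed.

Lemma g_tw_const t x : (1 <= t <= T)%N ->
  g_tw mu f g y T ps t x = if t == 1%N then psit0 mu ps else 1%R.
Proof.
move=> tT; have := pos t tT x; rewrite -/ps => p0.
rewrite /g_tw; case: eqP => [t1|_].
  have tT' : (t <= t <= T)%N by rewrite leqnn; case/andP: tT.
  rewrite -t1 key//.
  by rewrite mulrC mulrA mulVf ?gt_eqF// mul1r.
by rewrite key// divff ?gt_eqF.
Qed.

Lemma Lik_eq : Lik mu f g y T = intRd (fun x => (mu x * ps 1 x)%:E).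
Proof.
have [n Tn] : exists n, T = n.+1 by exists T.-1; rewrite prednK.
rewrite /Lik [in LHS]Tn /=; congr intRd; apply: funext => x.
rewrite psE !EFinM fineK; last by apply: C_fin; rewrite leqnn T0.
congr (_ * _); rewrite /C Tn subn1 /=.
rewrite -chain_scale//; last by move=> l; rewrite lee_fin; apply: prodr_ge0 => i _; apply: g0.
apply: chain_ext => l /=.
rewrite big_ord_recl /= -EFinM; congr ((_ * _)%:E).
Qed.

Lemma Lik_fin : Lik mu f g y T \is a fin_num.
Proof.
have [M HM] := gM.
have M0 : (0 <= M)%R by exact: le_trans (g0 0%R 0%R) (HM 0%R 0%R).
have L0 : 0 <= Lik mu f g y T.
  by apply: chain_ge0 => // l; rewrite lee_fin; apply: prodr_ge0 => i _; apply: g0.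
rewrite ge0_fin_numE//; apply: (@le_lt_trans _ _ (M ^+ T)%:E); last exact: ltry.
apply: chain_bound => //.
- by move=> l; rewrite lee_fin; apply: prodr_ge0 => i _; apply: g0.
- move=> l; rewrite lee_fin -[in X in (_ <= X)%R](card_ord T) -prodr_const.
  by apply: ler_prod => i _; rewrite g0 HM.
- exact: exprn_ge0.
Qed.

Lemma psit0_eq : (psit0 mu ps)%:E = Lik mu f g y T.
Proof. by rewrite /psit0 /RintRd -Lik_eq fineK// Lik_fin. Qed.

End Main.
From mathcomp Require Import zify.
Lemma prod_first (R : realType) (n : nat) (p : R) : (0 < n)%N ->
  \prod_(t < n) (if (t : nat) == 0%N then p else 1) = p.
Proof. by case: n => // n _; rewrite big_ord_recl /= big1 ?mulr1. Qed.

Lemma sum_const_seq (R : realType) (X : Type) (s : seq X) (c : R) :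
  \sum_(z <- s) c = c *+ size s.
Proof. by elim: s => [|a s IH]; rewrite ?big_nil ?big_cons ?IH ?mulrS. Qed.

Section Fin.
Variables (R : realType) (d d' : nat).
Variables (mu : 'rV[R]_d -> R) (f : 'rV[R]_d -> 'rV[R]_d -> R)
  (g : 'rV[R]_d -> 'rV[R]_d' -> R) (y : nat -> 'rV[R]_d') (T : nat).

Lemma apf_zero psi N n h F : (forall l, size l = (size h + n)%N -> F l = 0%E) ->
  apf_int mu f g y T psi N n h F = 0%E.
Proof.
elim: n h => [|n IH] h FH /=; first by apply: FH; rewrite addn0.
rewrite (_ : (fun x => _) = fun _ => 0%E); first exact: intRd0.
apply: funext => x; rewrite IH ?mule0// => l Hl.
by apply: FH; rewrite Hl size_rcons addSnnS.
Qed.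
End Fin.

Theorem proposition2 (R : realType) (d d' T : nat)
  (mu : 'rV[R]_d -> R) (f : 'rV[R]_d -> 'rV[R]_d -> R)
  (g : 'rV[R]_d -> 'rV[R]_d' -> R) (y : nat -> 'rV[R]_d') :
  (0 < T)%N ->
  (* mu is a probability density on R^d *)
  (forall x, 0 <= mu x) -> borel_fun mu -> intRd (fun x => (mu x)%:E) = 1%E ->
  (* f is a transition density on R^d *)
  (forall x x', 0 <= f x x') -> borel_fun2 f ->
  (forall x, intRd (fun x' => (f x x')%:E) = 1%E) ->
  (* g is a nonnegative, bounded, continuous observation density *)
  (forall x v, 0 <= g x v) -> (exists M : R, forall x v, g x v <= M) ->
  continuous (fun p : 'rV[R]_d * 'rV[R]_d' => g p.1 p.2) ->
  (* L > 0 *)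
  (0 < Lik mu f g y T)%E ->
  (* each psi*_t is positive *)
  (forall t, (1 <= t <= T)%N -> forall x, 0 < psi_star mu f g y T t x) ->
  forall N : nat, (0 < N)%N ->
  apf_prob mu f g y T (psi_star mu f g y T) N
    (fun h => (apf_Z mu f g y T (psi_star mu f g y T) N h)%:E != Lik mu f g y T) = 0%E.
Proof.
move=> T0 mu0 _ mu1 f0 _ f1 g0 gM _ _ pos N N0.
rewrite /apf_prob; apply: apf_zero => l /= Hl.
suff -> : apf_Z mu f g y T (psi_star mu f g y T) N l = psit0 mu (psi_star mu f g y T).
  by rewrite psit0_eq// eqxx.
rewrite /apf_Z -[RHS](@prod_first _ T)//; apply: eq_bigr => t _.
rewrite (eq_bigr (fun _ => if (t : nat) == 0%N then psit0 mu (psi_star mu f g y T) else 1)); last first.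
  by move=> z _; rewrite g_tw_const// ltn_ord.
rewrite sum_const_seq size_takel; last first.
  rewrite size_drop Hl /=; have := ltn_ord t; nia.
by rewrite -[X in _ * X = _]mulr_natl mulrA mulVf ?mul1r// pnatr_eq0 -lt0n.
Qed.
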